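(* Let $n\ge3$ and $A\subseteq[n]$. If $n-1\in A$, then $f_n(A\setminus\{n-1\})\ge f_n(A)$. If $2\notin A$, then $f_n(A\cup\{2\})\ge f_n(A)$.
   Context: For $m\ge1$ and a set $B$ of positive integers, $f_m(B)$ denotes the number of linear orders $q$ on $[m]$ such that for every triple $i<j<k$ in $[m]$: if $j\in B$ then $i$ is not ranked last among $\{i,j,k\}$ in $q$, and if $j\notin B$ then $k$ is not ranked first among $\{i,j,k\}$ in $q$. *)

(* Defs.v *)
From mathcomp Require Import all_boot all_order all_fingroup.
Set Implicit Arguments. Unset Strict Implicit. Unset Printing Implicit Defensive.

(* Elements of [m] = {1,...,m} are encoded by i : 'I_m, standing for i.+1.
   A linear order q on [m] is encoded by the bijection s : {perm 'I_m}
   assigning to each element its rank (0 = first, m-1 = last). *)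

Definition good_order (m : nat) (B : pred nat) (s : {perm 'I_m}) : bool :=
  [forall i : 'I_m, forall j : 'I_m, forall k : 'I_m,
     ((i < j) && (j < k)) ==>
     (if B j.+1
      then ~~ ((s j < s i) && (s k < s i))
      else ~~ ((s k < s i) && (s k < s j)))].

Definition f (m : nat) (B : pred nat) : nat :=
  #|[set s : {perm 'I_m} | good_order B s]|.

(* Main.v *)
Require Import Defs.
From mathcomp Require Import all_boot all_order all_fingroup.
From mathcomp Require Import zify.
Set Implicit Arguments. Unset Strict Implicit. Unset Printing Implicit Defensive.

Lemma f_ext n (B B' : pred nat) :
  (forall x, 0 < x <= n -> B x = B' x) -> f n B = f n B'.
Proof.
move=> H; rewrite /f; apply: eq_card => s; rewrite !inE /good_order.
apply/eq_forallb => i; apply/eq_forallb => j; apply/eq_forallb => k.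
by rewrite H //= ltn_ord.
Qed.

Definition dualf n (s : {perm 'I_n}) (i : 'I_n) : 'I_n := rev_ord (s (rev_ord i)).
Lemma dualf_inj n s : injective (@dualf n s).
Proof. by move=> x y /rev_ord_inj /perm_inj /rev_ord_inj. Qed.
Definition dual n s : {perm 'I_n} := perm (@dualf_inj n s).
Lemma dualE n s i : val (@dual n s i) = n - (s (rev_ord i)).+1.
Proof. by rewrite permE. Qed.

Lemma dual_le n (B : pred nat) : f n B <= f n (fun x => ~~ B (n.+1 - x)).
Proof.
rewrite /f.
have inj : injective (@dual n).
  move=> s1 s2 e; apply/permP => x.
  have := congr1 (fun s : {perm 'I_n} => s (rev_ord x)) e.
  rewrite !permE /dualf rev_ordK => /rev_ord_inj. done.
rewrite -(card_imset _ inj); apply: subset_leq_card.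
apply/subsetP => s' /imsetP [s]; rewrite inE => hs ->; rewrite inE.
apply/forallP => i; apply/forallP => j; apply/forallP => k; apply/implyP => /andP [hij hjk].
have rv : forall x : 'I_n, nat_of_ord (rev_ord x) = n - x.+1 by [].
have h1 : (rev_ord k < rev_ord j) && (rev_ord j < rev_ord i) by rewrite !rv; have := ltn_ord k; lia.
move: hs => /forallP/(_ (rev_ord k))/forallP/(_ (rev_ord j))/forallP/(_ (rev_ord i))/implyP/(_ h1).
have e : (rev_ord j).+1 = n - j by rewrite rv; have := ltn_ord j; lia.
rewrite e !dualE subSS.
have := ltn_ord (s (rev_ord i)); have := ltn_ord (s (rev_ord j)); have := ltn_ord (s (rev_ord k)).
case: (B (n - j)) => /=; lia.
Qed.

Definition rotf m (r t : 'I_m.+1) : 'I_m.+1 :=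
  if t == ord_max then r else if r <= t then inord t.+1 else t.

Lemma rotfE m (r t : 'I_m.+1) :
  nat_of_ord (rotf r t) = if nat_of_ord t == m then nat_of_ord r else if r <= t then t.+1 else t.
Proof.
rewrite /rotf; case: eqP => [->|ne]; rewrite ?eqxx //.
have ht : nat_of_ord t != m by apply/eqP => h; apply: ne; apply: val_inj.
rewrite (negPf ht); case: ifP => // _ /=; rewrite inordK //; move: ht => /= ht.
have := ltn_ord t; lia.
Qed.

Lemma rotf_inj m (r : 'I_m.+1) : injective (rotf r).
Proof.
move=> x y e; apply: val_inj => /=; have := congr1 (@nat_of_ord _) e; rewrite !rotfE.
have := ltn_ord x; have := ltn_ord y; have := ltn_ord r.
repeat case: ifP; lia.
Qed.

Definition rot m (r : 'I_m.+1) : {perm 'I_m.+1} := perm (@rotf_inj m r).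

Lemma sdist n (s : {perm 'I_n}) (x y : 'I_n) : nat_of_ord x != nat_of_ord y -> nat_of_ord (s x) != nat_of_ord (s y).
Proof. move=> h; apply: contra h => /eqP /val_inj /perm_inj ->; done. Qed.

Lemma claim1 m (A : pred nat) : A m.+2 -> f m.+3 A <= f m.+3 (fun x => A x && (x != m.+2)).
Proof.
move=> hA.
pose a : 'I_m.+3 := Ordinal (leqnSn m.+2).
pose b : 'I_m.+3 := ord_max.
have ab : nat_of_ord a != nat_of_ord b by rewrite /= ltn_eqF.
have Ltop : forall s : {perm 'I_m.+3}, good_order A s -> nat_of_ord (s a) = m.+2 \/ nat_of_ord (s b) = m.+2.
  move=> s hs.
  pose t := (s^-1 ord_max)%g.
  have st : s t = ord_max by rewrite /t permKV.
  case: (eqVneq (nat_of_ord t) m.+1) => ht.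
    left; have -> : a = t by apply: val_inj. by rewrite st.
  case: (eqVneq (nat_of_ord t) m.+2) => ht2.
    right; have -> : b = t by apply: val_inj. by rewrite st.
  have h1 : (t < a) && (a < b) by rewrite /=; have := ltn_ord t; lia.
  move: hs => /forallP/(_ t)/forallP/(_ a)/forallP/(_ b)/implyP/(_ h1).
  rewrite /= hA st /=.
  have := ltn_ord (s a); have := ltn_ord (s b); have := sdist s (x:=a) (y:=b) ab.
  lia.
pose phi (s : {perm 'I_m.+3}) :=
  if (nat_of_ord (s a) == m.+2) && (nat_of_ord (s b) != m.+1) then (s * rot (s b))%g else s.
have s'E : forall (s : {perm 'I_m.+3}) x, nat_of_ord (s a) = m.+2 ->
   nat_of_ord ((s * rot (s b))%g x) = if nat_of_ord x == m.+1 then nat_of_ord (s b) else if s b <= s x then (s x).+1 else s x.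
  move=> s x hsa; rewrite permM permE rotfE.
  case: (eqVneq (nat_of_ord x) m.+1) => hx.
    have -> : x = a by apply: val_inj.
    by rewrite hsa eqxx.
  have := sdist s (x:=x) (y:=a) hx. rewrite hsa => /negPf ->. done.
rewrite /f.
have inj : {in [set s | good_order A s] &, injective phi}.
  move=> s1 s2; rewrite !inE => h1 h2; rewrite /phi.
  case: ifP => [/andP [/eqP a1 b1] | n1]; case: ifP => [/andP [/eqP a2 b2] | n2] e.
  - have e1 := congr1 (fun s : {perm 'I_m.+3} => nat_of_ord (s a)) e.
    move: e1; rewrite /= !permM !permE !rotfE a1 a2 eqxx => /val_inj e1.
    by move: e; rewrite e1 => /mulIg.
  - have := Ltop _ h2; rewrite -e !s'E //= eqxx leqnn.
    have := ltn_ord (s1 b); have := sdist s1 (x:=a) (y:=b) ab; rewrite a1.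
    repeat case: ifP; lia.
  - have := Ltop _ h1; rewrite e !s'E //= eqxx leqnn.
    have := ltn_ord (s2 b); have := sdist s2 (x:=a) (y:=b) ab; rewrite a2.
    repeat case: ifP; lia.
  - done.
rewrite -(card_in_imset inj); apply: subset_leq_card.
apply/subsetP => s' /imsetP [s]; rewrite inE => hs ->; rewrite inE /phi.
have ha : nat_of_ord a = m.+1 by [].
have hb : nat_of_ord b = m.+2 by [].
have Ea : forall x : 'I_m.+3, nat_of_ord x = m.+1 -> nat_of_ord (s x) = nat_of_ord (s a).
  by move=> x hx; have -> : x = a by apply: val_inj.
have Eb : forall x : 'I_m.+3, nat_of_ord x = m.+2 -> nat_of_ord (s x) = nat_of_ord (s b).
  by move=> x hx; have -> : x = b by apply: val_inj.
have sa : forall x : 'I_m.+3, nat_of_ord x != m.+1 -> nat_of_ord (s x) != nat_of_ord (s a).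
  by move=> x hx; apply: sdist.
have sb : forall x : 'I_m.+3, nat_of_ord x != m.+2 -> nat_of_ord (s x) != nat_of_ord (s b).
  by move=> x hx; apply: sdist.
have sab := sdist s (x:=a) (y:=b) ab.
have ltS := fun x : 'I_m.+3 => ltn_ord (s x).
case: ifP => [/andP [/eqP hsa hsb] | hn].
  have mono : forall x y : 'I_m.+3, nat_of_ord x != m.+1 -> nat_of_ord y != m.+1 ->
      (nat_of_ord ((s * rot (s b))%g x) < nat_of_ord ((s * rot (s b))%g y)) = (s x < s y).
    move=> x y hx hy; rewrite !s'E // (negPf hx) (negPf hy).
    have := sa _ hx; have := sa _ hy; have := ltS x; have := ltS y; rewrite hsa.
    repeat case: ifP; lia.
  have mA1 : forall x : 'I_m.+3, nat_of_ord x != m.+1 -> nat_of_ord x != m.+2 ->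
      (nat_of_ord ((s * rot (s b))%g x) < nat_of_ord ((s * rot (s b))%g a)) = (s x < s b).
    move=> x hx hx2; rewrite !s'E // (negPf hx) eqxx.
    have := sa _ hx; have := sb _ hx2; have := ltS x; rewrite hsa.
    repeat case: ifP; lia.
  have mA2 : forall x : 'I_m.+3, nat_of_ord x != m.+1 -> nat_of_ord x != m.+2 ->
      (nat_of_ord ((s * rot (s b))%g a) < nat_of_ord ((s * rot (s b))%g x)) = (s b < s x).
    move=> x hx hx2; rewrite !s'E // (negPf hx) eqxx.
    have := sa _ hx; have := sb _ hx2; have := ltS x; rewrite hsa.
    repeat case: ifP; lia.
  apply/forallP => i; apply/forallP => j; apply/forallP => k; apply/implyP => /andP [hij hjk].
  have hk := ltn_ord k.
  case: (eqVneq (nat_of_ord k) m.+1) => hka.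
    have -> : k = a by apply: val_inj.
    have h2 : (i < j) && (j < b) by rewrite hij /=; lia.
    move: hs => /forallP/(_ i)/forallP/(_ j)/forallP/(_ b)/implyP/(_ h2).
    have -> : (j.+1 != m.+2) = true by lia.
    rewrite andbT /= mono ?mA1 ?mA2 //; lia.
  case: (eqVneq (nat_of_ord j) m.+1) => hja.
    have -> : j = a by apply: val_inj.
    have -> : k = b by apply: val_inj => /=; lia.
    rewrite /= eqxx andbF /= !s'E // eqxx hb /= leqnn; repeat case: ifP; lia.
  have h1 : (i < j) && (j < k) by rewrite hij hjk.
  move: hs => /forallP/(_ i)/forallP/(_ j)/forallP/(_ k)/implyP/(_ h1).
  have -> : (j.+1 != m.+2) = true by lia.
  rewrite andbT /= !mono //; lia.
apply/forallP => i; apply/forallP => j; apply/forallP => k; apply/implyP => /andP [hij hjk].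
have hk := ltn_ord k.
case: (eqVneq (nat_of_ord j) m.+1) => hja.
  have -> : j = a by apply: val_inj.
  have -> : k = b by apply: val_inj => /=; lia.
  rewrite /= eqxx andbF /=.
  have := Ltop _ hs; have := sa i; have := sb i; have := ltS i.
  move: hn; lia.
have h1 : (i < j) && (j < k) by rewrite hij hjk.
move: hs => /forallP/(_ i)/forallP/(_ j)/forallP/(_ k)/implyP/(_ h1).
have -> : (j.+1 != m.+2) = true by lia.
by rewrite andbT.
Qed.

Theorem corollary2 (n : nat) (A : pred nat) :
  3 <= n ->
  (forall x, A x -> 1 <= x <= n) ->
  (A n.-1 -> f n (fun x => A x && (x != n.-1)) >= f n A) /\
  (~~ A 2 -> f n (fun x => A x || (x == 2)) >= f n A).
Proof.
case: n => [|[|[|m]]] // _ _; split.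
  by move=> h; apply: claim1.
move=> h2.
apply: (leq_trans (dual_le _ A)).
have e2 : m.+4 - m.+2 = 2 by lia.
apply: (leq_trans (claim1 (A := fun x => ~~ A (m.+4 - x)) _)); first by rewrite /= e2.
rewrite (@f_ext _ _ (fun x => ~~ (fun y => A y || (y == 2)) (m.+4 - x))); last first.
  move=> x /andP [hx1 hx2] /=; rewrite negb_or; congr (_ && _).
  apply/idP/idP => /eqP H; apply/eqP; lia.
apply: (leq_trans (dual_le _ _)).
rewrite (@f_ext _ _ (fun x => A x || (x == 2))) //.
move=> x /andP [hx1 hx2] /=; rewrite negbK.
by have -> : m.+4 - (m.+4 - x) = x by lia.
Qed.
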